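(* Let $M=(\mathcal{S},\mathcal{A},R,T,\gamma)$ be a Markov decision process with discount factor $\gamma\in[0,1)$ and initial state distribution $\mu$, and let $\{\phi\}$ be a set of randomizations $\phi:\mathcal{S}\to\mathcal{S}'$, where $\mathcal{S}'$ is equipped with a distance $|\cdot-\cdot|$. Let $\pi$ be a policy mapping elements of $\mathcal{S}'$ to distributions over $\mathcal{A}$ which is $K_\pi$-Lipschitz over $\{\phi\}$, i.e. $$K_{\pi} = \sup_{\phi_1, \phi_2 \in \{\phi\}} \sup_{s\in \mathcal{S}} \frac{D_{TV}(\pi(\cdot|\phi_1(s)) \| \pi(\cdot|\phi_2(s)))}{ |\phi_1(s)-\phi_2(s)|}<\infty .$$ Suppose the rewards are bounded by $r_{\max}$, i.e. $|R(s,a)|\le r_{\max}$ for all $s\in\mathcal{S}$, $a\in\mathcal{A}$. For $\phi\in\{\phi\}$, let $\eta_\phi$ denote the expected discounted cumulative return $\mathbb{E}\big[\sum_{t=0}^\infty \gamma^t R(s_t,a_t)\big]$ of $\pi$ in the MDP whose states are randomized by $\phi$, i.e. $s_0\sim\mu$, $a_t\sim\pi(\cdot\mid\phi(s_t))$, $s_{t+1}\sim T(s_t,a_t)$. Then for all $\phi_1,\phi_2\in\{\phi\}$, writing $\eta_i=\eta_{\phi_i}$ and $\|\phi_1-\phi_2\|_\infty=\sup_{s\in\mathcal{S}}|\phi_1(s)-\phi_2(s)|$, $$|\eta_1 - \eta_2| \leq 2 r_{\max} \sum_{t=0}^\infty \gamma^t \min\big(1,(t+1)K_\pi\|\phi_1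 - \phi_2\|_\infty\big) \leq \frac{2 r_{\max}K_\pi }{(1-\gamma)^2}\|\phi_1 - \phi_2\|_\infty .$$
   Context: An MDP $(\mathcal{S},\mathcal{A},R,T,\gamma)$ has state space $\mathcal{S}$, action space $\mathcal{A}$, reward function $R:\mathcal{S}\times\mathcal{A}\to\mathbb{R}$, transition dynamics $T:\mathcal{S}\times\mathcal{A}\to\Pr(\mathcal{S})$ and discount factor $\gamma$. A (visual) randomization $\phi:\mathcal{S}\to\mathcal{S}'$ changes only the state observed by the agent; the reward function, transition dynamics and initial state distribution of the underlying MDP are unaffected. $D_{TV}(P\|Q)$ denotes the total variation distance between distributions $P$ and $Q$. *)

(* Defs.v *)
From HB Require Import structures.
From mathcomp Require Import all_boot all_order all_algebra.
From mathcomp Require Import all_classical all_reals all_analysis measurable_realfun.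
Set Implicit Arguments. Unset Strict Implicit. Unset Printing Implicit Defensive.
Import Order.TTheory GRing.Theory Num.Theory numFieldNormedType.Exports.
Local Open Scope classical_set_scope.
Local Open Scope ring_scope.

Definition rseries_sum (R : realType) (u : nat -> R) : R := limn (series u).

Definition D_TV (R : realType) (dA : measure_display) (A : measurableType dA)
  (P Q : probability A R) : R :=
  sup [set `|fine (P B) - fine (Q B)| | B in [set B : set A | measurable B]].

Definition sup_dist (R : realType) (S S' : Type) (dist : S' -> S' -> R)
  (phi1 phi2 : S -> S') : R :=
  sup [set dist (phi1 s) (phi2 s) | s in [set: S]].

Section Return.
Variables (R : realType) (dS dA : measure_display)
  (S : measurableType dS) (A : measurableType dA) (S' : Type)
  (Rw : S * A -> R) (T : S * A -> probability S R)
  (pi : S' -> probability A R) (phi : S -> S').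

(* stepV k s = E[ R(s_k, a_k) | s_0 = s ] in the MDP randomized by phi:
   a_t ~ pi(. | phi s_t), s_{t+1} ~ T(s_t, a_t). *)
Fixpoint stepV (k : nat) (s : S) : R :=
  match k with
  | 0 => \int[pi (phi s)]_(a in [set: A]) Rw (s, a)
  | k'.+1 => \int[pi (phi s)]_(a in [set: A])
               (\int[T (s, a)]_(s' in [set: S]) stepV k' s')
  end.

End Return.

Definition exp_reward (R : realType) (dS dA : measure_display)
  (S : measurableType dS) (A : measurableType dA) (S' : Type)
  (Rw : S * A -> R) (T : S * A -> probability S R)
  (pi : S' -> probability A R) (mu : probability S R) (phi : S -> S') (t : nat) : R :=
  \int[mu]_(s in [set: S]) stepV Rw T pi phi t s.

Definition disc_return (R : realType) (dS dA : measure_display)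
  (S : measurableType dS) (A : measurableType dA) (S' : Type)
  (Rw : S * A -> R) (T : S * A -> probability S R)
  (pi : S' -> probability A R) (mu : probability S R) (gamma : R) (phi : S -> S') : R :=
  rseries_sum (fun t => gamma ^+ t * exp_reward Rw T pi mu phi t).

(* Main.v *)
Require Import Defs.
From HB Require Import structures.
From mathcomp Require Import all_boot all_order all_algebra.
From mathcomp Require Import all_classical all_reals all_analysis measurable_realfun.
From mathcomp Require Import lra ring.
Import Order.TTheory GRing.Theory Num.Theory numFieldNormedType.Exports.
Local Open Scope classical_set_scope.
Local Open Scope ring_scope.
Section MkMF.
Context d (T : measurableType d) (R : realType).
Definition mkmf (f : T -> R) (mf : measurable_fun [set: T] f) : T -> R := f.
HB.instance Definition _ f mf := isMeasurableFun.Build d _ T R (@mkmf f mf) mf.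
End MkMF.

Section Aux.
Context (R : realType) d (Y : measurableType d).

Lemma PT (P : probability Y R) : (P : {measure set Y -> \bar R}) [set: Y] = 1%E.
Proof. exact: probability_setT. Qed.

Lemma intb (P : probability Y R) (f : Y -> R) c :
  measurable_fun [set: Y] f -> (forall y, `|f y| <= c) ->
  P.-integrable [set: Y] (EFin \o f).
Proof.
move=> mf fc; apply: measurable_bounded_integrable => //.
  by apply: (le_lt_trans (probability_le1 P measurableT)); rewrite ltry.

exists c; split; first exact: num_real.
by move=> x cx y _; apply: le_trans (fc y) _; apply: ltW.
Qed.

Lemma Rint_bound (P : probability Y R) (f : Y -> R) c :
  measurable_fun [set: Y] f -> (forall y, `|f y| <= c) ->
  `|\int[P]_y f y| <= c.
Proof.
move=> mf fc.
have h1 := le_normr_Rintegral measurableT (@intb P _ _ mf fc). apply: le_trans h1 _.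
have -> : c = \int[P]_(y in [set: Y]) c.
  by rewrite Rintegral_cst // PT /= mulr1.
apply: le_Rintegral => //.
- apply: (@intb _ _ c); first exact: measurableT_comp.
  by move=> y; rewrite normr_id.
- apply: (@intb _ _ `|c|) => //.
Qed.


Lemma prob_inh (P : probability Y R) : exists y : Y, True.
Proof.
have [//|/forallNP h] := pselect (exists y : Y, True).
have e : [set: Y] = set0 by apply/seteqP; split => // y _; exact: (h y).
move: (PT P); rewrite e measure0 => -[] /eqP; rewrite eq_sym oner_eq0. by [].
Qed.

Lemma Rint_diff (P : probability Y R) (f g : Y -> R) c M :
  measurable_fun [set: Y] f -> measurable_fun [set: Y] g ->
  (forall y, `|f y| <= M) -> (forall y, `|g y| <= M) ->
  (forall y, `|f y - g y| <= c) ->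
  `|\int[P]_y f y - \int[P]_y g y| <= c.
Proof.
move=> mf mg fM gM fgc.
rewrite -RintegralB //; [|exact: intb mf fM|exact: intb mg gM].
by apply: Rint_bound => //; exact: measurable_funB.
Qed.

Lemma Rint_TV1 (P Q : probability Y R) (f : Y -> R) c t :
  measurable_fun [set: Y] f -> (forall y, `|f y| <= c) ->
  (forall B, measurable B -> fine (P B) - fine (Q B) <= t) ->
  \int[P]_y f y <= \int[Q]_y f y + 2 * c * t.
Proof.
move=> mf fc hPQ.
have [y0 _] := prob_inh P.
have c0 : 0 <= c by apply: le_trans (fc y0).
have t0 : 0 <= t by have := hPQ set0 measurable0; rewrite !measure0 /= subr0.
pose g := fun y => f y + c.
have mg : measurable_fun [set: Y] g by apply: measurable_funD.
have g0 : forall y, 0 <= g y.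
  by move=> y; rewrite /g -lerBlDr sub0r; have := fc y; rewrite ler_norml => /andP[].
have g2 : forall y, g y <= 2 * c.
  by move=> y; rewrite /g mulr2n mulrDl mul1r lerD2r; have := fc y; rewrite ler_norml => /andP[].
pose X : {RV P >-> R} := @mkmf _ _ _ g mg.
have EE : forall (P' : probability Y R), ('E_P'[X] = (\int[P']_y f y + c)%:E)%E.
  move=> P'; rewrite expectation_def.
  have gb : forall y, `|g y| <= 2 * c by move=> y; rewrite ger0_norm.
  have iG := @intb P' _ _ mg gb.
  transitivity ((\int[P']_y g y)%:E); first by rewrite /Rintegral fineK // integrable_fin_num.
  rewrite /g RintegralD //; [by rewrite Rintegral_cst // PT mulr1 | exact: intb mf fc |].
  exact: (@intb P' _ `|c|).
have key : ('E_P[X] <= 'E_Q[X] + (2 * c * t)%:E)%E.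
  rewrite !ge0_expectation_ccdf //.
  set D := `[0%R, +oo[%classic.
  pose h := fun r : R => (t * \1_(`[0, 2 * c[%classic : set R) r)%:E.
  have mh : measurable_fun [set: R] h.
    apply/measurable_EFinP; apply: measurable_funM => //.
  have h0 : forall r, (0 <= h r)%E by move=> r; rewrite lee_fin mulr_ge0.
  apply: (@le_trans _ _ (\int[lebesgue_measure]_(r in D) (ccdf (P:=Q) X r + h r))%E).
    apply: ge0_le_integral => //.
    - exact: measurable_itv.
    - by apply: (measurable_funS measurableT) => //; exact: ccdf_measurable.
    - apply: emeasurable_funD.
        by apply: (measurable_funS measurableT) => //; exact: ccdf_measurable.
      exact: (measurable_funS measurableT).
    - move=> r Dr.
      rewrite /ccdf /distribution /pushforward /=.
      set B := (_ @^-1` _).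
      have mB : measurable B.
        by rewrite -[B]setTI; apply: (mg) => //; exact: measurable_itv.
      have [r2c|r2c] := ltrP r (2 * c).
        have -> : h r = t%:E.
          rewrite /h indicE mem_set ?mulr1 //= in_itv /= r2c andbT.
          by move: Dr; rewrite /D /= in_itv /= andbT.
        have fP : P B = (fine (P B))%:E by rewrite fineK // fin_num_measure.
        have fQ : Q B = (fine (Q B))%:E by rewrite fineK // fin_num_measure.
        rewrite fP fQ -EFinD lee_fin -lerBlDl; exact: hPQ.
      have -> : B = set0.
        apply/seteqP; split => // y; rewrite /B /= in_itv /= andbT => ry.
        by have := lt_le_trans ry (le_trans (g2 y) r2c); rewrite ltxx.
      by rewrite measure0; apply: adde_ge0.
  rewrite ge0_integralD //; first last.
  - exact: (measurable_funS measurableT).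
  - by apply: (measurable_funS measurableT) => //; exact: ccdf_measurable.
  - exact: measurable_itv.
  apply: leeD => //; rewrite le_eqVlt; apply/orP; left; apply/eqP.
  rewrite /h.
  under eq_integral do rewrite EFinM.
  rewrite ge0_integralZl //; last first.
  - apply/measurable_EFinP; exact: (measurable_funS measurableT).
  - exact: measurable_itv.
  rewrite integral_indic //; last exact: measurable_itv.
  rewrite setIidl; last first.
    by move=> r /=; rewrite !in_itv /= => /andP[r0 _]; rewrite /D /= in_itv /= r0.
  transitivity (t%:E * (2*c)%:E)%E; last by rewrite -EFinM mulrC.
  congr (_ * _)%E.
  apply: eq_trans (lebesgue_measure_itv `[0, 2*c[) _.
  rewrite /= lte_fin.
  have [c0'|] := ltrP 0 (2 * c); first by rewrite -EFinD subr0.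
  by move=> c2; apply/eqP; rewrite eq_sym eqe eq_le c2 /= mulr_ge0.
move: key; rewrite !EE -EFinD lee_fin => H; lra.
Qed.


Lemma fineP01 (P : probability Y R) B : measurable B -> 0 <= fine (P B) <= 1.
Proof.
move=> mB; have fP : P B = (fine (P B))%:E by rewrite fineK // fin_num_measure.
apply/andP; split; first by rewrite -lee_fin -fP.
by rewrite -lee_fin -fP; exact: probability_le1.
Qed.

Lemma TV_ub (P Q : probability Y R) B : measurable B ->
  `|fine (P B) - fine (Q B)| <= D_TV P Q.
Proof.
move=> mB; apply: ub_le_sup; last by exists B.
exists 1 => _ [B' mB' <-].
have := fineP01 P B' mB'; have := fineP01 Q B' mB'.
move=> /andP[h1 h2] /andP[h3 h4]; rewrite ler_norml; apply/andP; split; lra.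
Qed.

Lemma Rint_TV (P Q : probability Y R) (f : Y -> R) c :
  measurable_fun [set: Y] f -> (forall y, `|f y| <= c) ->
  `|\int[P]_y f y - \int[Q]_y f y| <= 2 * c * D_TV P Q.
Proof.
move=> mf fc.
have h1 := @Rint_TV1 P Q f c (D_TV P Q) mf fc.
have h2 := @Rint_TV1 Q P f c (D_TV P Q) mf fc.
have H1 : \int[P]_y f y <= \int[Q]_y f y + 2 * c * D_TV P Q.
  apply: h1 => B mB; apply: le_trans (TV_ub P Q B mB); exact: ler_norm.
have H2 : \int[Q]_y f y <= \int[P]_y f y + 2 * c * D_TV P Q.
  apply: h2 => B mB; apply: le_trans (TV_ub P Q B mB); rewrite distrC; exact: ler_norm.
rewrite ler_norml; apply/andP; split; lra.
Qed.


Lemma Rint_shift (P : probability Y R) (f : Y -> R) c :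
  measurable_fun [set: Y] f -> (forall y, `|f y| <= c) ->
  (\int[P]_y (f y + c)%:E)%E = (\int[P]_y f y + c)%:E.
Proof.
move=> mf fc.
have mg : measurable_fun [set: Y] (fun y => f y + c) by apply: measurable_funD.
have gb : forall y, `|f y + c| <= `|c| + `|c|.
  by move=> y; apply: le_trans (ler_normD _ _) _; rewrite lerD2r; apply: le_trans (fc y) (ler_norm _).
have iG := @intb P _ _ mg gb.
transitivity ((\int[P]_y (f y + c))%:E); first by rewrite /Rintegral fineK //; apply: integrable_fin_num iG.
rewrite RintegralD //; [by rewrite Rintegral_cst // PT mulr1 | exact: intb mf fc |].
exact: (@intb P _ `|c|).
Qed.

End Aux.

Section Kern.
Context (R : realType) dX dY (X : measurableType dX) (Y : measurableType dY).

Definition kP (P : X -> probability Y R)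
  (mP : forall U, measurable U -> measurable_fun [set: X] (fun x => P x U)) :
  X -> {measure set Y -> \bar R} := fun x => P x.

HB.instance Definition _ P mP := isKernel.Build _ _ X Y R (@kP P mP) mP.
HB.instance Definition _ P mP :=
  Kernel_isProbability.Build _ _ X Y R (@kP P mP) (fun x => probability_setT (P x)).

Lemma meas_kint (P : X -> probability Y R)
  (mP : forall U, measurable U -> measurable_fun [set: X] (fun x => P x U))
  (h : X * Y -> R) c :
  measurable_fun [set: X * Y] h -> (forall z, `|h z| <= c) ->
  measurable_fun [set: X] (fun x => \int[P x]_y h (x, y)).
Proof.
move=> mh hc.
have k0 : forall z, (0 <= (h z + c)%:E)%E.
  move=> z; rewrite lee_fin -lerBlDr sub0r.
  by have := hc z; rewrite ler_norml => /andP[].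
have mk : measurable_fun [set: X * Y] (fun z => (h z + c)%:E).
  by apply/measurable_EFinP; apply: measurable_funD.
have M := measurable_fun_integral_finite_kernel (fun z => (h z + c)%:E) (@kP P mP) k0 mk.
have -> : (fun x => \int[P x]_y h (x, y)) =
   (fun x => fine (\int[@kP P mP x]_y (h (x, y) + c)%:E)%E - c).
  apply/funext => x; rewrite /kP Rint_shift /= ?addrK //.
  exact: measurable_fun_pair2.
apply: measurable_funB => //.
exact: measurableT_comp (fine_measurable measurableT) M.
Qed.
End Kern.


Section MDP.
Context (R : realType) dS dA (S : measurableType dS) (A : measurableType dA)
  (S' : Type) (Rw : S * A -> R) (T : S * A -> probability S R)
  (pi : S' -> probability A R) (r : R).

Lemma stepV_prop (phi : S -> S') :
  measurable_fun [set: S * A] Rw ->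
  (forall B : set S, measurable B -> measurable_fun [set: S * A] (fun sa : S * A => (T sa B : \bar R))) ->
  (forall B : set A, measurable B -> measurable_fun [set: S] (fun s : S => (pi (phi s) B : \bar R))) ->
  (forall s a, `|Rw (s, a)| <= r) ->
  forall k, measurable_fun [set: S] (stepV Rw T pi phi k) /\
            forall s, `|stepV Rw T pi phi k s| <= r.
Proof.
move=> mRw mT mpi Rb.
have Rb' : forall z, `|Rw z| <= r by case.
elim=> [|k [mV Vb]] /=.
  split; first exact: (@meas_kint _ _ _ _ _ (fun s => pi (phi s)) mpi Rw r mRw Rb').
  move=> s; apply: Rint_bound => //; exact: measurable_fun_pair2.
pose G := fun z : S * A => \int[T z]_s' stepV Rw T pi phi k s'.
have mG : measurable_fun [set: S * A] G.
  apply: (@meas_kint _ _ _ _ _ T mT (fun zy => stepV Rw T pi phi k zy.2) r) => //.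
  exact: measurableT_comp mV measurable_snd.
have Gb : forall z, `|G z| <= r by move=> z; apply: Rint_bound.
split; first exact: (@meas_kint _ _ _ _ _ (fun s => pi (phi s)) mpi G r mG Gb).
move=> s; apply: (@Rint_bound _ _ _ _ (fun a => G (s, a))) => //.
exact: measurable_fun_pair2.
Qed.


Lemma stepV_diff (phi1 phi2 : S -> S') Dk :
  measurable_fun [set: S * A] Rw ->
  (forall B : set S, measurable B -> measurable_fun [set: S * A] (fun sa : S * A => (T sa B : \bar R))) ->
  (forall B : set A, measurable B -> measurable_fun [set: S] (fun s : S => (pi (phi1 s) B : \bar R))) ->
  (forall B : set A, measurable B -> measurable_fun [set: S] (fun s : S => (pi (phi2 s) B : \bar R))) ->
  (forall s a, `|Rw (s, a)| <= r) -> 0 <= r ->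
  (forall s, D_TV (pi (phi1 s)) (pi (phi2 s)) <= Dk) ->
  forall k s, `|stepV Rw T pi phi1 k s - stepV Rw T pi phi2 k s| <= 2 * r * (k.+1%:R * Dk).
Proof.
move=> mRw mT mpi1 mpi2 Rb r0 hD.
have P1 := stepV_prop phi1 mRw mT mpi1 Rb.
have P2 := stepV_prop phi2 mRw mT mpi2 Rb.
have r2 : 0 <= 2 * r by rewrite mulr_ge0.
elim=> [|k IH] s /=.
  rewrite mul1r.
  have mRs : measurable_fun [set: A] (fun a => Rw (s, a)) by exact: measurable_fun_pair2.
  apply: le_trans (@Rint_TV _ _ _ (pi (phi1 s)) (pi (phi2 s)) _ r mRs (Rb s)) _.
  exact: ler_wpM2l.
pose G1 := fun z : S * A => \int[T z]_s' stepV Rw T pi phi1 k s'.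
pose G2 := fun z : S * A => \int[T z]_s' stepV Rw T pi phi2 k s'.
have [mV1 Vb1] := P1 k.
have [mV2 Vb2] := P2 k.
have mG1 : measurable_fun [set: S * A] G1.
  apply: (@meas_kint _ _ _ _ _ T mT (fun zy => stepV Rw T pi phi1 k zy.2) r) => //.
  exact: measurableT_comp mV1 measurable_snd.
have mG2 : measurable_fun [set: S * A] G2.
  apply: (@meas_kint _ _ _ _ _ T mT (fun zy => stepV Rw T pi phi2 k zy.2) r) => //.
  exact: measurableT_comp mV2 measurable_snd.
have Gb1 : forall z, `|G1 z| <= r by move=> z; apply: Rint_bound.
have Gb2 : forall z, `|G2 z| <= r by move=> z; apply: Rint_bound.
have mGs1 : measurable_fun [set: A] (fun a => G1 (s, a)) by exact: measurable_fun_pair2.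
have mGs2 : measurable_fun [set: A] (fun a => G2 (s, a)) by exact: measurable_fun_pair2.
have e1 : `|\int[pi (phi1 s)]_a G1 (s, a) - \int[pi (phi2 s)]_a G1 (s, a)| <= 2 * r * Dk.
  apply: le_trans (@Rint_TV _ _ _ (pi (phi1 s)) (pi (phi2 s)) _ r mGs1 (fun a => Gb1 (s, a))) _.
  exact: ler_wpM2l.
have e2 : `|\int[pi (phi2 s)]_a G1 (s, a) - \int[pi (phi2 s)]_a G2 (s, a)| <= 2 * r * (k.+1%:R * Dk).
  apply: (@Rint_diff _ _ _ _ _ _ _ r) => // a.
  apply: (@Rint_diff _ _ _ _ _ _ _ r) => //.
change (`|\int[pi (phi1 s)]_a G1 (s, a) - \int[pi (phi2 s)]_a G2 (s, a)| <= 2 * r * (k.+2%:R * Dk)).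
apply: le_trans (ler_distD (\int[pi (phi2 s)]_a G1 (s, a)) _ _) _.
have -> : (k.+2)%:R = 1 + k.+1%:R :> R by rewrite -natr1 addrC.
apply: le_trans (lerD e1 e2) _; rewrite le_eqVlt; apply/orP; left; apply/eqP; ring.
Qed.

End MDP.
Section Ser.
Context (R : realType).

Lemma psum_bound (g : R) n : 0 <= g < 1 ->
  \sum_(0 <= t < n) (t.+1%:R * g ^+ t) <= 1 / (1 - g) ^+ 2.
Proof.
move=> /andP[g0 g1].
have cl : forall n, (\sum_(0 <= t < n) t.+1%:R * g ^+ t) * (1 - g) ^+ 2
   = 1 - (n%:R + 1) * g ^+ n + n%:R * (g * g ^+ n).
  elim=> [|k IH]; first by rewrite big_nil; ring.
  have st : \sum_(0 <= t < k.+1) t.+1%:R * g ^+ t =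
     \sum_(0 <= t < k) t.+1%:R * g ^+ t + k.+1%:R * g ^+ k by rewrite big_nat_recr.
  rewrite st mulrDl IH -!natr1 !exprS; ring.
have p : 0 < (1 - g) ^+ 2 by rewrite exprn_gt0 // subr_gt0.
rewrite ler_pdivlMr // cl.
have : n%:R * (g * g ^+ n) <= (n%:R + 1) * g ^+ n.
  have gn : 0 <= g ^+ n := exprn_ge0 n g0.
  have hn : 0 <= n%:R :> R by [].
  have n1 : n.+1%:R = n%:R + 1 :> R by rewrite -addn1 natrD.
  have h3 : 0 <= n%:R * g ^+ n * (1 - g) by rewrite !mulr_ge0 // subr_ge0 ltW.
  nra.
lra.
Qed.


Lemma ser_cvg (g r : R) (e : nat -> R) : 0 <= g < 1 -> (forall t, `|e t| <= r) ->
  cvgn (series (fun t => g ^+ t * e t)).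
Proof.
move=> /andP[g0 g1] eb.
have r0 : 0 <= r by apply: le_trans (eb 0%N).
have gabs : `|g| < 1 by rewrite ger0_norm.
apply: normed_cvg.
apply: (@series_le_cvg _ _ (geometric r g)).
- by move=> n; exact: normr_ge0.
- by move=> n; rewrite /geometric /= mulr_ge0 // exprn_ge0.
- move=> n; rewrite /geometric /= normrM ger0_norm ?exprn_ge0 // mulrC.
  by apply: ler_wpM2r => //; exact: exprn_ge0.
- exact: is_cvg_geometric_series.
Qed.

Lemma ser_ncvg (g r : R) (e : nat -> R) : 0 <= g < 1 -> (forall t, `|e t| <= r) ->
  cvgn [normed series (fun t => g ^+ t * e t)].
Proof.
move=> /andP[g0 g1] eb.
have r0 : 0 <= r by apply: le_trans (eb 0%N).
have gabs : `|g| < 1 by rewrite ger0_norm.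
apply: (@series_le_cvg _ _ (geometric r g)).
- by move=> n; exact: normr_ge0.
- by move=> n; rewrite /geometric /= mulr_ge0 // exprn_ge0.
- move=> n; rewrite /geometric /= normrM ger0_norm ?exprn_ge0 // mulrC.
  by apply: ler_wpM2r => //; exact: exprn_ge0.
- exact: is_cvg_geometric_series.
Qed.

Lemma series_main (g r K D : R) (e1 e2 : nat -> R) :
  0 <= g < 1 -> 0 <= r -> 0 <= K * D ->
  (forall t, `|e1 t| <= r) -> (forall t, `|e2 t| <= r) ->
  (forall t, `|e1 t - e2 t| <= 2 * r * (t.+1%:R * K * D)) ->
  let bound := 2 * r * rseries_sum (fun t => g ^+ t * Num.min 1 (t.+1%:R * K * D)) in
  `|rseries_sum (fun t => g ^+ t * e1 t) - rseries_sum (fun t => g ^+ t * e2 t)| <= bound /\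
  bound <= 2 * r * K / (1 - g) ^+ 2 * D.
Proof.
move=> /andP[g0 g1] r0 KD0 b1 b2 b12 bound.
have gg : 0 <= g < 1 by rewrite g0 g1.
set m := fun t => g ^+ t * Num.min 1 (t.+1%:R * K * D).
have tKD : forall t : nat, 0 <= t.+1%:R * K * D by move=> t; rewrite -mulrA mulr_ge0.
have mb : forall t, `|Num.min 1 (t.+1%:R * K * D)| <= 1.
  move=> t; rewrite ger0_norm; first by rewrite ge_min lexx.
  by rewrite le_min ler01 tKD.
have cm : cvgn (series m) := ser_cvg _ _ _ gg mb.
have c1 := ser_cvg _ _ _ gg b1.
have c2 := ser_cvg _ _ _ gg b2.
split.
  rewrite /bound /rseries_sum -lim_seriesB //.
  have -> : (fun t => g ^+ t * e1 t) - (fun t => g ^+ t * e2 t) =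
            (fun t => g ^+ t * (e1 t - e2 t)).
    by apply/funext => t; rewrite /= mulrBr.
  have b3 : forall t, `|e1 t - e2 t| <= r + r.
    by move=> t; apply: le_trans (ler_normB _ _) _; apply: lerD.
  have cn := ser_ncvg _ _ _ gg b3.
  apply: le_trans (lim_series_norm cn) _.
  rewrite -[2 * r * _]/((2 * r) *: limn (series m)) -lim_seriesZ //.
  apply: lim_series_le => //; first exact: is_cvg_seriesZ.
  move=> t; rewrite /m /= normrM ger0_norm ?exprn_ge0 //.
  change (g ^+ t * `|e1 t - e2 t| <= 2 * r * (g ^+ t * Num.min 1 (t.+1%:R * K * D))).
  rewrite mulrCA.
  apply: ler_wpM2l; first exact: exprn_ge0.
  set x := t.+1%:R * K * D.
  have [h|h] := leP 1 x.
    rewrite mulr1; apply: le_trans (ler_normB _ _) _.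
    by rewrite mulr2n mulrDl mul1r; apply: lerD.
  exact: b12.
have L : limn (series m) <= K * D / (1 - g) ^+ 2.
  apply: limr_le => //; apply: nearW => n.
  rewrite /series /=.
  apply: (@le_trans _ _ (\sum_(0 <= t < n) (t.+1%:R * g ^+ t) * (K * D))).
    apply: ler_sum => t _; rewrite /m.
    have -> : t.+1%:R * g ^+ t * (K * D) = g ^+ t * (t.+1%:R * K * D) by ring.
    apply: ler_wpM2l; first exact: exprn_ge0.
    by rewrite ge_min lexx orbT.
  rewrite -big_distrl /= mulrC.
  have -> : K * D / (1 - g) ^+ 2 = K * D * (1 / (1 - g) ^+ 2) by rewrite mul1r.
  apply: ler_wpM2l => //; exact: psum_bound.
rewrite /bound; apply: le_trans (ler_wpM2l _ L) _; first by rewrite mulr_ge0.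
rewrite le_eqVlt; apply/orP; left; apply/eqP; ring.
Qed.

End Ser.

Theorem proposition1 (R : realType) (dS dA : measure_display)
  (S : measurableType dS) (A : measurableType dA) (S' : Type)
  (dist : S' -> S' -> R)
  (Rw : S * A -> R) (T : S * A -> probability S R) (gamma : R)
  (mu : probability S R) (Phi : set (S -> S')) (pi : S' -> probability A R)
  (K_pi r_max : R) :
  (* discount factor *)
  0 <= gamma < 1 ->
  (* measurability (standing assumptions of a measurable MDP) *)
  measurable_fun [set: S * A] Rw ->
  (forall B : set S, measurable B -> measurable_fun [set: S * A] (fun sa : S * A => (T sa B : \bar R))) ->
  (forall phi, Phi phi -> forall B : set A, measurable B ->
     measurable_fun [set: S] (fun s : S => (pi (phi s) B : \bar R))) ->
  (* bounded rewards *)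
  (forall s a, `|Rw (s, a)| <= r_max) ->
  (* pi is K_pi-Lipschitz over Phi *)
  0 <= K_pi ->
  (forall phi1 phi2, Phi phi1 -> Phi phi2 -> forall s : S,
     D_TV (pi (phi1 s)) (pi (phi2 s)) <= K_pi * dist (phi1 s) (phi2 s)) ->
  forall phi1 phi2, Phi phi1 -> Phi phi2 ->
  (* ||phi1 - phi2||_oo is finite *)
  has_ubound [set dist (phi1 s) (phi2 s) | s in [set: S]] ->
  let D := sup_dist dist phi1 phi2 in
  let bound := 2 * r_max *
     rseries_sum (fun t => gamma ^+ t * Num.min 1 (t.+1%:R * K_pi * D)) in
  `|disc_return Rw T pi mu gamma phi1 - disc_return Rw T pi mu gamma phi2| <= bound /\
  bound <= 2 * r_max * K_pi / (1 - gamma) ^+ 2 * D.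
Proof.
move=> g01 mRw mT mpi Rb K0 Lip phi1 phi2 P1 P2 hub D bound.
have [s0 _] := @prob_inh _ _ _ mu.
have [a0 _] := @prob_inh _ _ _ (pi (phi1 s0)).
have r0 : 0 <= r_max by apply: le_trans (Rb s0 a0).
have dD : forall s, dist (phi1 s) (phi2 s) <= D.
  by move=> s; rewrite /D /sup_dist; apply: (ub_le_sup hub); exists s.
have hD : forall s, D_TV (pi (phi1 s)) (pi (phi2 s)) <= K_pi * D.
  move=> s; apply: le_trans (Lip _ _ P1 P2 s) _; exact: ler_wpM2l.
have KD0 : 0 <= K_pi * D.
  apply: le_trans (hD s0); apply: le_trans (@TV_ub _ _ _ _ _ set0 measurable0).
  exact: normr_ge0.
have mpi1 := mpi phi1 P1.
have mpi2 := mpi phi2 P2.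
have SP1 := @stepV_prop _ _ _ _ _ _ Rw T pi r_max phi1 mRw mT mpi1 Rb.
have SP2 := @stepV_prop _ _ _ _ _ _ Rw T pi r_max phi2 mRw mT mpi2 Rb.
have SD := @stepV_diff _ _ _ _ _ _ Rw T pi r_max phi1 phi2 (K_pi * D) mRw mT mpi1 mpi2 Rb r0 hD.
apply: series_main => //.
- move=> t; have [m1 b1] := SP1 t; exact: Rint_bound.
- move=> t; have [m2 b2] := SP2 t; exact: Rint_bound.
- move=> t; have [m1 b1] := SP1 t; have [m2 b2] := SP2 t.
  apply: (@Rint_diff _ _ _ _ _ _ _ r_max) => // y.
  rewrite -(mulrA t.+1%:R); exact: SD.
Qed.
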